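(* Let $\mathcal{U}\subset\mathbb{R}^n\times\mathbb{R}^p$ be open, $\mathcal{D}\subset\mathcal{U}$ nonempty, $\Gamma:\mathcal{D}\times\mathbb{R}^m\rightrightarrows\mathbb{R}^q$ with $\Gamma(\xi,\cdot)$ positively homogeneous for all $\xi\in\mathcal{D}$, and let $\bar\xi\in\mathcal{D}$, $H:=\Gamma(\bar\xi,\cdot)$. Suppose $\Gamma$ is outer semicontinuous and that there are $s\le q$ and $\mathcal{T}:\mathbb{R}^m\rightrightarrows\mathbb{R}^{q-s}$ with $H(z)=\{0\}\times\mathcal{T}(z)$ for all $z\in\mathbb{R}^m$ (where $0\in\mathbb{R}^s$). If $\mathcal{T}(0)=\{0\}$ and $\mathcal{T}^{-1}(0)=\{0\}$, then the mapping $\mathcal{K}(\xi,z):=\mathrm{cone}(\Gamma(\xi,z))$ on $\mathcal{D}\times\mathbb{R}^m$ is outer semicontinuous relative to $\mathcal{D}\times\mathrm{bd}\,\mathbb{B}$ at $(\bar\xi,z)$ for every $z\in\mathrm{bd}\,\mathbb{B}\cap\mathrm{dom}\,H$.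
   Context: $\mathbb{B}$ closed unit ball, $\mathrm{bd}$ boundary, $\mathrm{cone}(Z):=\bigcup_{\gamma\ge0}\gamma Z$, $\mathcal{T}^{-1}(0):=\{z\mid 0\in\mathcal{T}(z)\}$. Positive homogeneity: $H(\gamma z)=\gamma H(z)$ for all $\gamma>0$. A map $M$ is outer semicontinuous at $x$ relative to $X$ if $\limsup_{x'\to x,\,x'\in X}M(x')\subset M(x)$ (Painlevé–Kuratowski); $\Gamma$ outer semicontinuous means this at every point of $\mathcal{D}\times\mathbb{R}^m$. *)

(* Defs.v *)
From HB Require Import structures.
From mathcomp Require Import all_boot all_order all_algebra.
From mathcomp Require Import all_classical all_reals topology normedtype sequences.
Set Implicit Arguments. Unset Strict Implicit. Unset Printing Implicit Defensive.
Import Order.TTheory GRing.Theory Num.Theory.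
Import numFieldNormedType.Exports.
Local Open Scope classical_set_scope.
Local Open Scope ring_scope.

Definition eucl_norm {R : realType} {m : nat} (z : 'rV[R]_m) : R :=
  Num.sqrt (\sum_(i < m) (z ord0 i) ^+ 2).

(* bd B : boundary of the closed Euclidean unit ball = unit sphere. *)
Definition unit_sphere (R : realType) (m : nat) : set 'rV[R]_m :=
  [set z | eucl_norm z = 1].

Definition cone {R : realType} {q : nat} (Z : set 'rV[R]_q) : set 'rV[R]_q :=
  [set y | exists2 g : R, 0 <= g & exists2 x, Z x & y = g *: x].

Definition pos_homogeneous {R : realType} {m q : nat}
  (H : 'rV[R]_m -> set 'rV[R]_q) : Prop :=
  forall (g : R) (z : 'rV[R]_m), 0 < g -> H (g *: z) = (fun y => g *: y) @` H z.

Definition sdom {A B : Type} (M : A -> set B) : set A := [set x | M x !=set0].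

(* Painleve-Kuratowski outer limit of M at x relative to X (sequential form,
   appropriate for the finite-dimensional spaces used here). *)
Definition outer_limit {A B : topologicalType} (M : A -> set B) (X : set A) (x : A)
  : set B :=
  [set y | exists (xk : nat -> A) (yk : nat -> B),
     [/\ (forall k, X (xk k)), (forall k, M (xk k) (yk k)),
         xk @ \oo --> x & yk @ \oo --> y]].

Definition osc_at {A B : topologicalType} (M : A -> set B) (X : set A) (x : A) : Prop :=
  outer_limit M X x `<=` M x.
Arguments unit_sphere : clear implicits.

(* Main.v *)
Require Import Defs.
From HB Require Import structures.
From mathcomp Require Import all_boot all_order all_algebra.
From mathcomp Require Import all_classical all_reals topology normedtype sequences.
From mathcomp Require Import ring lra.
Import Order.TTheory GRing.Theory Num.Theory.
Import numFieldNormedType.Exports.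
Local Open Scope classical_set_scope.
Local Open Scope ring_scope.

Lemma incr_ge (f : nat -> nat) : increasing_seq f -> forall n, (n <= f n)%N.
Proof.
move=> /increasing_seqP fi; elim=> // n IH.
exact: leq_ltn_trans IH (fi n).
Qed.

Lemma subseq_cvg {T : topologicalType} (u : nat -> T) (a : T) (f : nat -> nat) :
  increasing_seq f -> u @ \oo --> a -> u \o f @ \oo --> a.
Proof.
move=> fi ua; apply: cvg_comp ua.
move=> P [n _ Pn]; exists n => // m /= nm; apply: Pn.
have := @incr_ge f fi m. rewrite /=. move=> h; exact: (leq_trans nm h).
Qed.
Arguments subseq_cvg {T u a f}.

Lemma extract {R : realType} (V : normedModType R) (A : set V) (u : nat -> V) :
  compact A -> (forall k, A (u k)) ->
  exists f, increasing_seq f /\ exists a, A a /\ u \o f @ \oo --> a.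
Proof.
move=> cA Au.
have uA : (u @ \oo) A by exists 0%N => // k _; exact: Au.
have [a [Aa ca]] := cA (u @ \oo) _ uA.
pose d k := `|a - u k|.
have cd : cluster (d @ \oo) (0:R).
  apply/cluster_eventuallyP => e n e0.
  have [y [[k /= nk <-] bk]] := ca (u @` [set k | (n <= k)%N]) (ball a e)
    (ltac:(exists n => // k /= nk; by exists k)) (nbhsx_ballx a _ e0).
  exists k => //; rewrite sub0r normrN normr_id /d.
  by move: bk; rewrite -ball_normE /ball_ /= => /ltW.
have [f fi fc] := (cluster_eventually_cvg d 0).1 cd.
exists f; split => //; exists a; split => //.
apply/cvgrPdist_lt => e e0.
move/cvgrPdist_lt: fc => /(_ e e0); apply: filterS => k.
by rewrite sub0r normrN normr_id.
Qed.

Lemma castmx_row0 {R : realType} (s q : nat) (hs : (s <= q)%N) :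
  castmx (erefl 1%N, subnKC hs) (row_mx (0 : 'rV[R]_s) (0 : 'rV[R]_(q - s))) = 0.
Proof. by apply/matrixP => i j; rewrite castmxE row_mx0 !mxE. Qed.

Lemma castmx_row0_inj {R : realType} (s q : nat) (hs : (s <= q)%N) (w : 'rV[R]_(q - s)) :
  castmx (erefl 1%N, subnKC hs) (row_mx (0 : 'rV[R]_s) w) = 0 -> w = 0.
Proof.
move/esym/castmx_sym => e; have := congr1 rsubmx e.
rewrite row_mxKr => ->.
by apply/matrixP => i j; rewrite !mxE castmxE !mxE.
Qed.

Lemma eucl_norm0 {R : realType} m : eucl_norm (0 : 'rV[R]_m) = 0.
Proof.
rewrite /eucl_norm big1 ?sqrtr0 // => i _; by rewrite mxE expr0n.
Qed.

Lemma scale_norm {R : realType} (V : normedModType R) (h : R) (y u : V) :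
  0 <= h -> y = h *: u -> y = (`|y| / `|u|) *: u.
Proof.
move=> h0 ->; have [->|u0] := eqVneq u 0; first by rewrite !scaler0.
rewrite normrZ ger0_norm // mulfK ?normr_eq0 //.
Qed.

Theorem proposition3 (R : realType) (n p m q s : nat)
  (U D : set ('rV[R]_n * 'rV[R]_p))
  (Gamma : ('rV[R]_n * 'rV[R]_p) -> 'rV[R]_m -> set 'rV[R]_q)
  (xibar : 'rV[R]_n * 'rV[R]_p)
  (hs : (s <= q)%N) (T : 'rV[R]_m -> set 'rV[R]_(q - s)) :
  open U -> D `<=` U -> D !=set0 ->
  (forall xi, D xi -> pos_homogeneous (Gamma xi)) ->
  D xibar ->
  (forall w : ('rV[R]_n * 'rV[R]_p) * 'rV[R]_m, D w.1 ->
     osc_at (fun w' => Gamma w'.1 w'.2) [set w' | D w'.1] w) ->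
  (forall z, Gamma xibar z =
     [set castmx (erefl 1%N, subnKC hs) (row_mx (0 : 'rV[R]_s) t) | t in T z]) ->
  T 0 = [set 0] ->
  [set z | T z 0] = [set 0] ->
  forall z, unit_sphere R m z -> sdom (Gamma xibar) z ->
    osc_at (fun w : ('rV[R]_n * 'rV[R]_p) * 'rV[R]_m => cone (Gamma w.1 w.2))
      [set w | D w.1 /\ unit_sphere R m w.2] (xibar, z).
Proof.
move=> _ _ _ hom Dxb osc HG T0 Tinv z zS _.
move=> y [xk [yk [Dk Gk xkc ykc]]].
have : forall k, exists gv : R * 'rV[R]_q,
    [/\ 0 <= gv.1, Gamma (xk k).1 (xk k).2 gv.2 & yk k = gv.1 *: gv.2].
  move=> k; have [g g0 [v Gv ->]] := Gk k; by exists (g, v).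
move=> /choice[gv Hgv].
pose v k := (gv k).2.
pose tau k := (1 + `|v k|)^-1.
pose uu k := tau k *: v k.
have tau0 k : 0 < tau k by rewrite invr_gt0 ltr_wpDr.
have tau1 k : tau k <= 1 by rewrite invf_le1 ?ler_wpDr // ltr_wpDr.
have nuu k : `|uu k| = 1 - tau k.
  rewrite normrZ gtr0_norm // /tau.
  have h : 1 + `|v k| != 0 by rewrite gt_eqF // ltr_wpDr.
  by field.
have Guu k : Gamma (xk k).1 (tau k *: (xk k).2) (uu k).
  rewrite (hom _ (Dk k).1 _ _ (tau0 k)); exists (v k) => //.
  by have [] := Hgv k.
have yuu k : yk k = (`|yk k| / `|uu k|) *: uu k.
  apply: (@scale_norm _ _ ((gv k).1 * (1 + `|v k|))).
    by have [g0 _ _] := Hgv k; rewrite mulr_ge0 // addr_ge0.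
  have [_ _ ->] := Hgv k; rewrite /uu scalerA -mulrA mulfV ?mulr1 //.
  by rewrite gt_eqF // ltr_wpDr.
have cB : compact (closed_ball (0 : 'rV[R]_q) 1).
  apply: bounded_closed_compact; last exact: closed_ball_closed.
  exists 1; split => // M M1 x; rewrite closed_ballE //= /closed_ball_ /= sub0r normrN.
  by move=> /le_trans; apply; exact: ltW.
have uuB k : closed_ball (0 : 'rV[R]_q) 1 (uu k).
  by rewrite closed_ballE //= /closed_ball_ /= sub0r normrN nuu lerBlDr lerDl ltW.
have [f1 [f1i [u [_ uc]]]] := @extract R _ _ _ cB uuB.
have [f2 [f2i [t [t01 tc]]]] := @extract R R^o _ (tau \o f1) (@segment_compact R 0 1)
  (fun k => ltac:(by rewrite /= in_itv /= (ltW (tau0 _)) tau1)).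
pose f := f1 \o f2.
have fi : increasing_seq f by move=> a b; rewrite /f /= (f1i (f2 a) (f2 b)); exact: f2i.
have uc' : uu \o f @ \oo --> u := subseq_cvg f2i uc.
have xc' : xk \o f @ \oo --> (xibar, z) := subseq_cvg fi xkc.
have yc' : yk \o f @ \oo --> y := subseq_cvg fi ykc.
have Gu : Gamma xibar (t *: z) u.
  apply: (osc (xibar, t *: z) Dxb).
  exists (fun k => ((xk (f k)).1, tau (f k) *: (xk (f k)).2)), (uu \o f).
  split => //.
  - by move=> k; exact: (Dk (f k)).1.
  - by move=> k; exact: (Guu (f k)).
  - apply: (@cvg_pair _ _ _ _ (nbhs xibar) (nbhs (t *: z))).
      exact: (cvg_comp _ fst xc' cvg_fst).
    apply: cvgZ; first exact: tc.
    exact: (cvg_comp _ snd xc' cvg_snd).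
have nu : `|u| = 1 - t.
  apply: (cvg_unique (@Rhausdorff R) (cvg_norm uc')).
  have -> : (fun x => `|(uu \o f) x|) = (fun x => 1 - tau (f x)).
    by apply/funext => k; rewrite /= nuu.
  exact: cvgB (cvg_cst _) tc.
have G0 : forall x, Gamma xibar 0 x -> x = 0.
  by move=> x; rewrite HG T0 => -[w /= -> <-]; exact: castmx_row0.
have t0 : t != 0.
  apply/eqP => t0; move: Gu nu; rewrite t0 scale0r => /G0 ->.
  by rewrite normr0 subr0 => /eqP; rewrite eq_sym oner_eq0.
have tpos : 0 < t.
  by move: t01; rewrite /= in_itv /= => /andP[t0' _]; rewrite lt_def t0.
rewrite (hom _ Dxb _ _ tpos) in Gu; case: Gu => x Gx ux.
have u0 : u != 0.
  apply/eqP => u0; move: ux; rewrite u0 => /eqP; rewrite scaler_eq0 (negbTE t0) /= => /eqP x0.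
  move: Gx; rewrite x0 HG => -[w Tw /castmx_row0_inj w0].
  have : [set z | T z 0] z by rewrite /= -w0.
  rewrite Tinv /= => z0. move: zS; rewrite /unit_sphere /= z0 eucl_norm0 => /eqP.
  by rewrite eq_sym oner_eq0.
have yc2 : yk \o f @ \oo --> (`|y| / `|u|) *: u.
  have -> : yk \o f = (fun k => (`|yk (f k)| / `|uu (f k)|) *: uu (f k)).
    by apply/funext=> k; exact: yuu.
  apply: cvgZ; last exact uc'.
  apply: cvgM; first exact: cvg_norm yc'.
  apply: cvgV; first by rewrite normr_eq0.
  exact: cvg_norm uc'.
have ey : y = (`|y| / `|u|) *: u.
  by apply: (cvg_unique (@norm_hausdorff _ _) yc' yc2).
rewrite /cone /=.
exists (`|y| / `|u| * t); first by apply: mulr_ge0; [apply: divr_ge0 | exact: ltW].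
by exists x => //; rewrite {1}ey -ux scalerA.
Qed.
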